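(* Let $x$ be a sequence of length $n$ and $i,j\in\{1,\ldots,n-1\}$ with $i\ne j$. Then $\tau(x,i)\not\approx_{CT}\tau(x,j)$.
   Context: Sequences are finite sequences of pairwise distinct integers indexed from $1$. For $1\le i\le n-1$, $\tau(x,i)$ is obtained from $x$ by exchanging $x[i]$ and $x[i+1]$. The Cartesian tree $C(x)$ of a sequence $x$ of length $n$ is empty if $n=0$; otherwise, if $x[i]$ is the minimum of $x$, it is the binary tree with root $i$, left subtree $C(x[1\ldots i-1])$ and right subtree $C(x[i+1\ldots n])$. $x\approx_{CT} y$ means $C(x)=C(y)$. *)

(* Defs.v *)
From mathcomp Require Import all_boot all_order all_algebra.
Set Implicit Arguments. Unset Strict Implicit. Unset Printing Implicit Defensive.
Import Order.TTheory GRing.Theory Num.Theory.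

(* Sequences of integers are [seq int]; the paper's 1-based index k
   corresponds to the 0-based position k-1 (nth 0 x (k-1)). *)

Inductive btree : Type :=
  | Leaf : btree
  | Node : btree -> nat -> btree -> btree.

Definition seqmin (h : int) (t : seq int) : int :=
  foldr (fun a b => if (a < b)%R then a else b) h t.

(* Cartesian tree, by recursion with fuel (fuel = size x suffices). If the
   minimum of x is x[k] (1-based k), the tree is Node (C(x[1..k-1])) k
   (C(x[k+1..n])). *)
Fixpoint ctree_aux (fuel : nat) (x : seq int) : btree :=
  match fuel with
  | 0 => Leaf
  | f.+1 =>
      match x with
      | [::] => Leaf
      | h :: t =>
          let k := index (seqmin h t) x in  (* 0-based position *)
          Node (ctree_aux f (take k x)) k.+1 (ctree_aux f (drop k.+1 x))
      end
  end.

Definition cartesian_tree (x : seq int) : btree := ctree_aux (size x) x.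

Definition ct_equiv (x y : seq int) : Prop := cartesian_tree x = cartesian_tree y.

(* tau x i : exchange x[i] and x[i+1] (1-based), i.e. 0-based positions
   i-1 and i. *)
Definition tau (x : seq int) (i : nat) : seq int :=
  set_nth 0%R (set_nth 0%R x i.-1 (nth 0%R x i)) i (nth 0%R x i.-1).

(* Main.v *)
Require Import Defs.
From mathcomp Require Import all_boot all_order all_algebra zify.
Import Order.TTheory GRing.Theory Num.Theory.

Lemma seqmin_in h t : seqmin h t \in h :: t.
Proof.
elim: t => [|a t IH]; first by rewrite /seqmin /= mem_head.
rewrite /seqmin /=; case: ifP => _; first by rewrite !inE eqxx orbT.
move: IH; rewrite /seqmin !inE => /orP[->//|->]; by rewrite !orbT.
Qed.

Lemma seqmin_le h t : forall z, z \in h :: t -> (seqmin h t <= z)%R.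
Proof.
elim: t => [|a t IH] z; first by rewrite inE => /eqP ->; rewrite /seqmin /=.
rewrite /seqmin /= -/(seqmin h t) !inE => H.
have IHt : z \in t -> (seqmin h t <= z)%R by move=> Hz; apply: IH; rewrite inE Hz orbT.
case: ifP => Hlt.
- case/or3P: H => [/eqP->|/eqP->|Hz].
  + exact: ltW (lt_le_trans Hlt (IH h (mem_head _ _))).
  + by [].
  + exact: ltW (lt_le_trans Hlt (IHt Hz)).
- case/or3P: H => [/eqP->|/eqP->|Hz].
  + exact: IH (mem_head _ _).
  + by rewrite leNgt Hlt.
  + exact: IHt.
Qed.

Lemma minpos h t (x := h :: t) (m := index (seqmin h t) x) :
  [/\ m < size x,
      forall k, k < m -> ~~ (nth 0%R x k <= nth 0%R x m)%R &
      forall k, k < size x -> (nth 0%R x m <= nth 0%R x k)%R].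
Proof.
have Hin := seqmin_in h t.
have Hm : nth 0%R x m = seqmin h t by rewrite nth_index.
split.
- by rewrite /m index_mem.
- move=> k Hk.
  have Hks : k < size x by apply: ltn_trans Hk _; rewrite /m index_mem.
  have Hne : nth 0%R x k != seqmin h t.
    by have := before_find 0%R Hk; rewrite /= => ->.
  have := seqmin_le _ _ _ (mem_nth 0%R Hks).
  rewrite Hm -/x => Hle; by rewrite -ltNge lt_neqAle eq_sym Hne Hle.
- move=> k Hk; rewrite Hm; exact: seqmin_le _ _ _ (mem_nth 0%R Hk).
Qed.

Lemma ctree_cons f h t : ctree_aux f.+1 (h::t) =
  Node (ctree_aux f (take (index (seqmin h t) (h::t)) (h::t)))
       (index (seqmin h t) (h::t)).+1
       (ctree_aux f (drop (index (seqmin h t) (h::t)).+1 (h::t))).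
Proof. by []. Qed.

Lemma key f : forall x y, size x <= f -> size y <= f ->
  ctree_aux f x = ctree_aux f y ->
  size x = size y /\ forall k, k.+1 < size x ->
    (nth 0%R x k <= nth 0%R x k.+1)%R = (nth 0%R y k <= nth 0%R y k.+1)%R.
Proof.
elim: f => [|f IH] x y.
  by case: x => // _; case: y.
case: x => [|h t]; case: y => [|h' t'] // Hx Hy.
rewrite !ctree_cons.
have [mx1 mx2 mx3] := minpos h t.
have [my1 my2 my3] := minpos h' t'.
move: mx1 mx2 mx3 my1 my2 my3 Hx Hy.
set x := h :: t; set y := h' :: t'.
set m := index _ x; set m' := index _ y.
move=> mx1 mx2 mx3 my1 my2 my3 Hx Hy.
move=> E; have Hm : m = m' by case: E.
have Hl : ctree_aux f (take m x) = ctree_aux f (take m' y) by case: E.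
have Hr : ctree_aux f (drop m.+1 x) = ctree_aux f (drop m'.+1 y) by case: E.
clearbody m m'; subst m'; clear E.
have Hsx : size x = (size t).+1 by [].
have Hsy : size y = (size t').+1 by [].
have Ex1 : size (take m x) = m by rewrite size_takel // ltnW.
have Ey1 : size (take m y) = m by rewrite size_takel // ltnW.
have Ex2 : size (drop m.+1 x) = size x - m.+1 by rewrite size_drop.
have Ey2 : size (drop m.+1 y) = size y - m.+1 by rewrite size_drop.
have [_ fl] := IH (take m x) (take m y) ltac:(rewrite Ex1; lia) ltac:(rewrite Ey1; lia) Hl.
have [sr fr] := IH (drop m.+1 x) (drop m.+1 y) ltac:(rewrite Ex2; lia) ltac:(rewrite Ey2; lia) Hr.
have Sxy : size x = size y by move: sr; rewrite Ex2 Ey2; lia.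
split=> // k Hk.
case: (ltngtP k.+1 m) => Hkm.
- have := fl k; rewrite Ex1 => /(_ Hkm).
  by rewrite !nth_take // ltnW.
- have Hkm' : m <= k by [].
  case: (ltngtP k m) => Hkm2; first lia; last first.
    subst k.
    have H1 : (x`_m <= x`_m.+1)%R by apply: mx3.
    have H2 : (y`_m <= y`_m.+1)%R by apply: my3; rewrite -Sxy.
    by rewrite H1 H2.
  have [k' Ek] : exists k', k = m.+1 + k' by exists (k - m.+1); lia.
  subst k.
  have := fr k'; rewrite !nth_drop addnS => -> //.
  rewrite Ex2; lia.
- have Hk' : k < m by rewrite -Hkm.
  rewrite -Hkm in mx2 my2.
  by rewrite (negbTE (mx2 _ (ltnSn k))) (negbTE (my2 _ (ltnSn k))).
Qed.

Lemma nth_tau x p k : nth 0%R (tau x p.+1) k =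
  if k == p.+1 then nth 0%R x p else if k == p then nth 0%R x p.+1 else nth 0%R x k.
Proof. rewrite /tau nth_set_nth /=; case: eqP => // _; by rewrite nth_set_nth. Qed.

Lemma size_tau x p : p.+1 < size x -> size (tau x p.+1) = size x.
Proof. move=> H; rewrite /tau !size_set_nth /=; lia. Qed.

Theorem lemma6 (x : seq int) (i j : nat) :
  uniq x ->
  1 <= i <= (size x).-1 ->
  1 <= j <= (size x).-1 ->
  i != j ->
  ~ ct_equiv (tau x i) (tau x j).
Proof.
move=> Ux.
wlog: i j / i < j.
  move=> W Hi Hj Hij.
  case: (ltngtP i j) => H.
  - exact: W.
  - by move=> E; apply: (W j i H Hj Hi _ (esym E)); rewrite eq_sym.
  - by rewrite H eqxx in Hij.
case: i => [|p] //; case: j => [|q] // Hpq Hi Hj _.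
have Hp : p.+1 < size x by lia.
have Hq : q.+1 < size x by lia.
rewrite /ct_equiv /cartesian_tree !size_tau // => E.
have [_ K] := key (size x) (tau x p.+1) (tau x q.+1) (eq_leq (size_tau _ _ Hp)) (eq_leq (size_tau _ _ Hq)) E.
have D : forall a b, a < size x -> b < size x -> a != b -> (nth 0%R x a == nth 0%R x b) = false.
  by move=> a b Ha Hb Hab; rewrite nth_uniq // (negbTE Hab).
have K0 := K p; rewrite size_tau // !nth_tau in K0.
have := K0 Hp.
rewrite !eqxx (ltn_eqF (ltnSn p)) ?(gtn_eqF (ltnSn p)).
have Dab := D p p.+1 (ltnW Hp) Hp (negbT (ltn_eqF (ltnSn p))).
case: (ltngtP q p.+1) => Hq1.
- by move: Hpq; rewrite ltnS leqNgt Hq1.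
- have e1 : (p == q.+1) = false by apply/negbTE; lia.
  have e2 : (p == q) = false by apply/negbTE; lia.
  have e3 : (p.+1 == q.+1) = false by apply/negbTE; lia.
  have e4 : (p.+1 == q) = false by apply/negbTE; lia.
  rewrite ?e1 ?e2 ?e3 ?e4.
  case: (ltgtP (nth 0%R x p) (nth 0%R x p.+1)) => H //.
  by rewrite H eqxx in Dab.
- subst q.
  have K1 := K p.+1; rewrite size_tau // !nth_tau in K1.
  have := K1 Hq.
  have Dac := D p p.+2 (ltnW (ltnW Hq)) Hq ltac:(apply/negP; lia).
  have Dbc := D p.+1 p.+2 Hp Hq ltac:(apply/negP; lia).
  have f1 : (p == p.+2) = false by apply/negbTE; lia.
  have f2 : (p.+1 == p.+2) = false by apply/negbTE; lia.
  have f3 : (p.+2 == p.+1) = false by apply/negbTE; lia.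
  have f4 : (p.+2 == p) = false by apply/negbTE; lia.
  have f5 : (p.+1 == p) = false by apply/negbTE; lia.
  have f6 : (p == p.+1) = false by apply/negbTE; lia.
  rewrite !eqxx ?f1 ?f2 ?f3 ?f4 ?f5 ?f6.
  move: Dab Dac Dbc.
  move: (nth 0%R x p) (nth 0%R x p.+1) (nth 0%R x p.+2) => a b c.
  clear. move=> Dab Dac Dbc. lia.
Qed.
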